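(* Let $s,b\ge1$ be integers, $y>0$, and $f(x)=1-x-byx^{s+1}$. Then (1) $f$ has no repeated roots, and (2) $f$ has a positive root $\lambda_1(y)$ whose modulus is smaller than the modulus of every other root of $f$; moreover $\lambda_1(y)<1$. *)

(* Defs.v *)
From HB Require Import structures.
From mathcomp Require Import all_boot all_order all_algebra.
From mathcomp Require Import complex.
From mathcomp Require Import reals.
Set Implicit Arguments. Unset Strict Implicit. Unset Printing Implicit Defensive.
Import Order.TTheory GRing.Theory Num.Theory.
Local Open Scope ring_scope.

Definition fpoly (R : realType) (s b : nat) (y : R) : {poly R[i]} :=
  1 - 'X - (((b%:R * y)%:C)%C)%:P * 'X^(s.+1).

(* Main.v *)
Require Import Defs.
From HB Require Import structures.
From mathcomp Require Import all_boot all_order all_algebra.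
From mathcomp Require Import complex polyrcf.
From mathcomp Require Import reals.
From mathcomp Require Import ring lra.
Import Order.TTheory GRing.Theory Num.Theory.
Local Open Scope ring_scope.
Local Open Scope complex_scope.

Lemma fpolyE (R : realType) s b (y : R) (z : R[i]) :
  (fpoly s b y).[z] = 1 - z - (b%:R * y)%:C * z ^+ s.+1.
Proof. by rewrite /fpoly !hornerE. Qed.

Lemma fpolyD (R : realType) s b (y : R) (z : R[i]) :
  (fpoly s b y)^`().[z] = - 1 - (b%:R * y)%:C * (z ^+ s *+ s.+1).
Proof. by rewrite /fpoly !derivB derivM !derivC derivX derivXn /= !hornerE hornerMn hornerXn. Qed.

Lemma part1 (R : realType) s b (y : R) : (1 <= s)%N -> (1 <= b)%N -> 0 < y ->
  forall z : R[i], ~~ (('X - z%:P) ^+ 2 %| fpoly s b y).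
Proof.
move=> s1 b1 y0 z; apply/negP; rewrite dvdp_eq => /eqP E.
have c0 : 0 < b%:R * y by rewrite mulr_gt0 // ltr0n.
move: (b%:R * y) c0 (@fpolyE R s b y z) (@fpolyD R s b y z) => c c0 E1 E2.
have H1 : 1 - z - c%:C * z ^+ s.+1 = 0.
  by rewrite -E1 E hornerM horner_exp hornerXsubC subrr expr0n mulr0.
have H2 : - 1 - c%:C * (z ^+ s *+ s.+1) = 0.
  by rewrite -E2 E derivM expr2 derivM derivXsubC !(hornerD, hornerM) hornerX hornerN hornerC subrr !(mulr0, mul0r, addr0).
have H3 : s%:R * z = s.+1%:R.
  apply/eqP; rewrite -subr_eq0; apply/eqP.
  have -> : s%:R * z - s.+1%:R = z * (- 1 - c%:C * (z ^+ s *+ s.+1))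
     - s.+1%:R * (1 - z - c%:C * z ^+ s.+1) by rewrite exprS; ring.
  by rewrite H1 H2 !mulr0 subr0.
have s0 : s%:R != 0 :> R by rewrite pnatr_eq0 -lt0n.
set r : R := s.+1%:R / s%:R.
have r0 : 0 < r by rewrite divr_gt0 // ltr0n // lt0n.
have zr : z = r%:C.
  rewrite /r fmorph_div !rmorph_nat; apply/(mulfI (x := s%:R)).
    by rewrite pnatr_eq0 -lt0n.
  by rewrite H3 mulrC divfK // pnatr_eq0 -lt0n.
have : ((-1 - c * (r ^+ s *+ s.+1))%:C = -1 - c%:C * (r%:C ^+ s *+ s.+1)).
  by rewrite rmorphB rmorphN1 rmorphM rmorphMn rmorphXn.
rewrite -zr H2 => /complexI.
have : 0 < c * (r ^+ s *+ s.+1) by rewrite mulr_gt0 // pmulrn_rgt0 // exprn_gt0.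
lra.
Qed.

Lemma part2 (R : realType) s b (y : R) : (1 <= s)%N -> (1 <= b)%N -> 0 < y ->
  exists l : R, [/\ 0 < l, l < 1, root (fpoly s b y) (l%:C)%C &
      forall z : R[i], root (fpoly s b y) z -> z != (l%:C)%C -> `|(l%:C)%C| < `|z|].
Proof.
move=> s1 b1 y0.
have c0 : 0 < b%:R * y by rewrite mulr_gt0 // ltr0n.
have hE := @fpolyE R s b y.
move: (b%:R * y) c0 hE => c c0 hE.
pose g : {poly R} := 'X + c%:P * 'X^(s.+1) - 1.
have gE x : g.[x] = x + c * x ^+ s.+1 - 1 by rewrite /g !hornerE.
have [l] : exists2 x, 0 <= x <= 1 & root g x.
  apply: poly_ivt => //; rewrite !gE expr0n expr1n /= mulr0 mulr1; apply/andP; split; lra.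

move=> /andP[l0 l1] /rootP; rewrite gE => gl0.
have gl : 1 - l - c * l ^+ s.+1 = 0 by lra.
have lpos : 0 < l.
  rewrite lt_neqAle l0 andbT; apply/eqP => l0e; move: gl; rewrite -l0e expr0n /= mulr0; lra.
have llt : l < 1.
  rewrite lt_neqAle l1 andbT; apply/eqP => l0e; move: gl; rewrite l0e expr1n mulr1; lra.
exists l; split => //.
  rewrite /root hE.
  have -> : 1 - l%:C - c%:C * l%:C ^+ s.+1 = (1 - l - c * l^+s.+1)%:C.
    by rewrite !rmorphB rmorph1 rmorphM rmorphXn.
  by rewrite gl.
case=> a bb /rootP rz zl.
rewrite ger0_norm ?ler0c ?ltW // normc_def /= ltcR.
set r := Num.sqrt (a ^+ 2 + bb ^+ 2).
have r0 : 0 <= r by apply: sqrtr_ge0.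
have ar : a <= r.
  by rewrite /r (le_trans (ler_norm a)) // -sqrtr_sqr ler_sqrt ?addr_ge0 ?sqr_ge0 // lerDl sqr_ge0.
have hn := normrX s.+1 (a +i* bb).
move: rz; rewrite hE.
case Ew: ((a +i* bb) ^+ s.+1) hn => [p q] hn rz.
move: hn; rewrite !normc_def /= -/r -rmorphXn => /complexI hn.
have pr : p <= r ^+ s.+1.
  by rewrite -hn (le_trans (ler_norm p)) // -sqrtr_sqr ler_sqrt ?addr_ge0 ?sqr_ge0 // lerDl sqr_ge0.
have re := congr1 (@complex.Re R) rz.
simpl in re.
rewrite ltNge; apply/negP => rl.
have rnl : r ^+ s.+1 <= l ^+ s.+1 by apply: lerXn2r; rewrite // qualifE /= ltW.
have h1 : c * p <= c * r ^+ s.+1 by rewrite ler_wpM2l // ltW.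
have h2 : c * r ^+ s.+1 <= c * l ^+ s.+1 by rewrite ler_wpM2l // ltW.
rewrite mul0r subr0 in re.
have ea : a = r by lra.
have er : r = l by lra.
have hsq : r ^+ 2 = a ^+ 2 + bb ^+ 2 by rewrite sqr_sqrtr // addr_ge0 ?sqr_ge0.
rewrite -ea in hsq.
have : bb ^+ 2 == 0 by apply/eqP; lra.
rewrite expf_eq0 /= => /eqP bb0.
move/negP: zl; apply; apply/eqP.
by rewrite bb0 ea er.
Qed.

Theorem lemma2p15 (R : realType) (s b : nat) (y : R) :
  (1 <= s)%N -> (1 <= b)%N -> 0 < y ->
  (forall z : R[i], ~~ (('X - z%:P) ^+ 2 %| fpoly s b y)) /\
  (exists l : R,
     [/\ 0 < l, l < 1, root (fpoly s b y) (l%:C)%C &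
      forall z : R[i], root (fpoly s b y) z -> z != (l%:C)%C -> `|(l%:C)%C| < `|z|]).
Proof.
move=> s1 b1 y0; split; [exact: part1 | exact: part2].
Qed.
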